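(* Let $d\ge2$, $\varepsilon\ge1$, $s=\lceil d/(1+e^\varepsilon)\rceil$. Let $q^{\mathrm{ss}}$ be the $\varepsilon$-LDP $\texttt{Subset Selection}$ mechanism with estimator $\hat{\mathbf{x}}^{\mathrm{ss}}=(\mathbf{z}-b_{\mathrm{ss}}\mathbf{1})/m_{\mathrm{ss}}$, and let $q^{\mathrm{mmrc}}$ be the MMRC mechanism simulating it with $N$ candidates and estimator $\hat{\mathbf{x}}^{\mathrm{mmrc}}=(\mathbf{z}_K-b_{\mathrm{mmrc}}\mathbf{1})/m_{\mathrm{mmrc}}$. Let $\lambda>0$. If \[ N\ge\frac{2(e^\varepsilon+1)^2(1+\lambda)^2}{0.24^2\lambda^2}\ln\Big(\frac{8(1+\lambda)}{0.24\lambda}\Big), \] then for every $\mathbf{x}\in\{e_1,\dots,e_d\}$, \[ \mathbb{E}_{q^{\mathrm{mmrc}}}\big[\|\hat{\mathbf{x}}^{\mathrm{mmrc}}-\mathbf{x}\|_2^2\big]\le(1+4\lambda+5\lambda^2+2\lambda^3)\,\mathbb{E}_{q^{\mathrm{ss}}}\big[\|\hat{\mathbf{x}}^{\mathrm{ss}}-\mathbf{x}\|_2^2\big]. \]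
   Context: $\texttt{Subset Selection}$: inputs $\{e_1,\dots,e_d\}$; outputs $\mathcal{Z}=\{\mathbf{z}\in\{0,1\}^d:\sum_iz_i=s\}$; for $\mathbf{x}=e_j$, $\mathsf{Cap}_{\mathbf{x}}=\{\mathbf{z}\in\mathcal{Z}:z_j=1\}$; $q^{\mathrm{ss}}(\mathbf{z}\mid\mathbf{x})=c_1=\frac{e^\varepsilon}{\binom{d-1}{s-1}e^\varepsilon+\binom{d-1}{s}}$ on $\mathsf{Cap}_{\mathbf{x}}$ and $c_2=\frac{1}{\binom{d-1}{s-1}e^\varepsilon+\binom{d-1}{s}}$ otherwise; $m_{\mathrm{ss}}=\frac{s(d-s)(e^\varepsilon-1)}{(d-1)(s(e^\varepsilon-1)+d)}$, $b_{\mathrm{ss}}=\frac{s((s-1)e^\varepsilon+(d-s))}{(d-1)(s(e^\varepsilon-1)+d)}$; $\mathbf{1}$ is the all-ones vector. Let $\bar\theta=s/d$. MMRC: draw $\mathbf{z}_1,\dots,\mathbf{z}_N$ i.i.d. uniform on $\mathcal{Z}$; $\theta$ = fraction of candidates in $\mathsf{Cap}_{\mathbf{x}}$; $\pi^{\mathrm{mrc}}(k)=\frac1N\frac{c_i}{\theta c_1+(1-\theta)c_2}$ ($i=1$ cap, $i=2$ otherwise); $t_u=\frac1N\frac{c_1}{\bar\theta c_1+(1-\bar\theta)c_2}$, $t_l=\frac1N\frac{c_2}{\bar\theta c_1+(1-\bar\theta)c_2}$; $\pi^{\mathrm{mmrc}}=\pi^{\mathrm{mrc}}$ if $\theta=\bar\theta$;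 if $\theta<\bar\theta$, $t_u$ on cap candidates and $\frac{1-N\theta t_u}{N(1-\theta)}$ on others; if $\theta>\bar\theta$, $t_l$ on non-cap candidates and $\frac{1-N(1-\theta)t_l}{N\theta}$ on cap ones; $K\sim\pi^{\mathrm{mmrc}}$. With $N\theta\sim\mathrm{Binom}(N,s/d)$, $G=\mathbb{E}_\theta\big[\frac{e^\varepsilon\theta}{e^\varepsilon\bar\theta+1-\bar\theta}\mathbf{1}(\theta\le\bar\theta)+\frac{e^\varepsilon\bar\theta+\theta-\bar\theta}{e^\varepsilon\bar\theta+1-\bar\theta}\mathbf{1}(\theta>\bar\theta)\big]$, $m_{\mathrm{mmrc}}=\frac{d}{d-1}G-\frac{s}{d-1}$, $b_{\mathrm{mmrc}}=\frac{s-G}{d-1}$. Expectations under $q^{\mathrm{mmrc}}$ are over the candidates and $K$. *)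

(* Defs.v *)
From HB Require Import structures.
From mathcomp Require Import all_boot all_order all_algebra.
From mathcomp Require Import all_classical all_reals all_analysis.
Set Implicit Arguments. Unset Strict Implicit. Unset Printing Implicit Defensive.
Import Order.TTheory GRing.Theory Num.Theory.
Local Open Scope ring_scope.

Section SubsetSelection.
Variables (R : realType) (d : nat) (eps : R).

(* s = ceil (d / (1 + e^eps)), as a natural number (it is positive). *)
Definition ss_s : nat := `|Num.ceil (d%:R / (1 + expR eps))|%N.

Variable s : nat.

Definition ss_den : R := 'C(d.-1, s.-1)%:R * expR eps + 'C(d.-1, s)%:R.
Definition c1 : R := expR eps / ss_den.
Definition c2 : R := 1 / ss_den.

(* output space Z : subsets z of 'I_d (z_i = 1 iff i \in z) with #|z| = s *)
Definition Zset : {set {set 'I_d}} := [set z : {set 'I_d} | #|z| == s].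

Definition q_ss (j : 'I_d) (z : {set 'I_d}) : R := if j \in z then c1 else c2.

Definition m_ss : R :=
  (s%:R * (d%:R - s%:R) * (expR eps - 1)) /
  ((d%:R - 1) * (s%:R * (expR eps - 1) + d%:R)).
Definition b_ss : R :=
  (s%:R * ((s%:R - 1) * expR eps + (d%:R - s%:R))) /
  ((d%:R - 1) * (s%:R * (expR eps - 1) + d%:R)).

Definition est (m b : R) (z : {set 'I_d}) (i : 'I_d) : R :=
  ((i \in z)%:R - b) / m.

Definition sqerr (m b : R) (z : {set 'I_d}) (j : 'I_d) : R :=
  \sum_(i < d) (est m b z i - (i == j)%:R) ^+ 2.

Definition E_ss (j : 'I_d) : R :=
  \sum_(z in Zset) q_ss j z * sqerr m_ss b_ss z j.

Variable N : nat.

Definition thbar : R := s%:R / d%:R.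

Definition theta (zs : {ffun 'I_N -> {set 'I_d}}) (j : 'I_d) : R :=
  #|[set k : 'I_N | j \in zs k]|%:R / N%:R.

Definition pi_mrc (zs : {ffun 'I_N -> {set 'I_d}}) (j : 'I_d) (k : 'I_N) : R :=
  let th := theta zs j in
  (if j \in zs k then c1 else c2) / (th * c1 + (1 - th) * c2) / N%:R.

Definition t_u : R := c1 / (thbar * c1 + (1 - thbar) * c2) / N%:R.
Definition t_l : R := c2 / (thbar * c1 + (1 - thbar) * c2) / N%:R.

Definition pi_mmrc (zs : {ffun 'I_N -> {set 'I_d}}) (j : 'I_d) (k : 'I_N) : R :=
  let th := theta zs j in
  if th == thbar then pi_mrc zs j k
  else if th < thbar then
    (if j \in zs k then t_u else (1 - N%:R * th * t_u) / (N%:R * (1 - th)))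
  else
    (if j \in zs k then (1 - N%:R * (1 - th) * t_l) / (N%:R * th) else t_l).

(* G = E_theta[...] with N theta ~ Binom(N, s/d) *)
Definition G_fun (th : R) : R :=
  if th <= thbar then expR eps * th / (expR eps * thbar + 1 - thbar)
  else (expR eps * thbar + th - thbar) / (expR eps * thbar + 1 - thbar).

Definition G_mmrc : R :=
  \sum_(k < N.+1) 'C(N, k)%:R * thbar ^+ k * (1 - thbar) ^+ (N - k)
                   * G_fun (k%:R / N%:R).

Definition m_mmrc : R := d%:R / (d%:R - 1) * G_mmrc - s%:R / (d%:R - 1).
Definition b_mmrc : R := (s%:R - G_mmrc) / (d%:R - 1).

(* E_{q^mmrc}[ || xhat^mmrc - e_j ||^2 ]: candidates i.i.d. uniform on Z,
   then K ~ pi^mmrc *)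
Definition E_mmrc (j : 'I_d) : R :=
  \sum_(zs : {ffun 'I_N -> {set 'I_d}} | [forall k, zs k \in Zset])
     (1 / (#|Zset|%:R ^+ N)) *
     \sum_(k < N) pi_mmrc zs j k * sqerr m_mmrc b_mmrc (zs k) j.

End SubsetSelection.

(* Main.v *)
Require Import Defs.
From HB Require Import structures.
From mathcomp Require Import all_boot all_order all_algebra.
From mathcomp Require Import all_classical all_reals all_analysis.
From mathcomp Require Import ring lra zify.
Set Implicit Arguments. Unset Strict Implicit. Unset Printing Implicit Defensive.
Import Order.TTheory GRing.Theory Num.Theory.
Local Open Scope ring_scope.

Section Binom.
Variable R : realFieldType.

Definition bw (N k : nat) (p : R) : R := 'C(N, k)%:R * p ^+ k * (1 - p) ^+ (N - k).

Lemma bw_sum N p : \sum_(k < N.+1) bw N k p = 1.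
Proof.
have := exprDn (1 - p) p N.
rewrite subrK expr1n => ->.
apply: eq_bigr => i _; rewrite /bw -mulr_natl; ring.
Qed.

Lemma bw_shift N p (f : nat -> R) :
  \sum_(k < N.+2) k%:R * bw N.+1 k p * f k =
  N.+1%:R * p * \sum_(i < N.+1) bw N i p * f i.+1.
Proof.
rewrite big_ord_recl /= mul0r mul0r add0r big_distrr /=.
apply: eq_bigr => i _; rewrite /bw /bump /= add1n subSS.
have H := mul_bin_diag N.+1 i; rewrite /= in H.
have H' : (i.+1)%:R * 'C(N.+1, i.+1)%:R = N.+1%:R * 'C(N, i)%:R :> R.
  by rewrite -!natrM H.
rewrite exprS.
transitivity ((i.+1%:R * 'C(N.+1, i.+1)%:R) * p * p ^+ i * (1 - p) ^+ (N - i) * f i.+1).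
  by ring.
rewrite H'; ring.
Qed.

Lemma bw_mean N p : \sum_(k < N.+1) k%:R * bw N k p = N%:R * p.
Proof.
case: N => [|n]; first by rewrite big_ord1 mul0r mul0r.
have := bw_shift n p (fun _ => 1).
under eq_bigr do rewrite mulr1.
move=> ->; under eq_bigr do rewrite mulr1.
by rewrite bw_sum mulr1.
Qed.

Lemma bw_mom2 N p : \sum_(k < N.+1) k%:R ^+ 2 * bw N k p = N%:R * p + N%:R * (N%:R - 1) * p ^+ 2.
Proof.
case: N => [|n]; first by rewrite big_ord1 !mul0r expr0n /= mul0r add0r.
have E1 : \sum_(k < n.+2) k%:R ^+ 2 * bw n.+1 k p = \sum_(k < n.+2) k%:R * bw n.+1 k p * (fun k : nat => k%:R) k.
  by apply: eq_bigr => k _ /=; ring.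
rewrite E1 bw_shift.
have E2 : \sum_(i < n.+1) bw n i p * (i.+1)%:R = \sum_(i < n.+1) (i%:R * bw n i p + bw n i p).
  by apply: eq_bigr => k _ /=; rewrite -natr1; ring.
rewrite E2 big_split /= bw_sum bw_mean -natr1; ring.
Qed.

Lemma bw_quad N p (a b c : R) :
  \sum_(k < N.+1) bw N k p * (a + b * k%:R + c * k%:R ^+ 2) =
  a + b * (N%:R * p) + c * (N%:R * p + N%:R * (N%:R - 1) * p ^+ 2).
Proof.
rewrite -bw_mom2 -bw_mean -[a in RHS]mulr1 -(bw_sum N p).
rewrite !big_distrr -!big_split /=; apply: eq_bigr => i _; ring.
Qed.


Lemma bw_X N p (a b c : R) : (0 < N)%N ->
  \sum_(k < N.+1) bw N k p * (a + b * (p - k%:R / N%:R) + c * (p - k%:R / N%:R) ^+ 2) =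
  a + c * (p * (1 - p) / N%:R).
Proof.
move=> hN.
have hn : N%:R != 0 :> R by rewrite pnatr_eq0 -lt0n.
transitivity (\sum_(k < N.+1) bw N k p * ((a + b * p + c * p ^+ 2)
   + (- b / N%:R - 2 * c * p / N%:R) * k%:R + (c / N%:R ^+ 2) * k%:R ^+ 2)).
  by apply: eq_bigr => k _; congr (_ * _); field; rewrite ?hn.
by rewrite bw_quad; field; rewrite ?hn.
Qed.

End Binom.


Section Count.
Variable R : realFieldType.

Lemma foldr_prodn (I : Type) (g : I -> nat) (s : seq I) :
  foldr muln 1%N (map g s) = (\prod_(x <- s) g x)%N.
Proof. by elim: s => [|x s IH] /=; rewrite ?big_nil ?big_cons ?IH. Qed.

Lemma sum_const_pred (I : finType) (Pp : pred I) (c : R) :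
  \sum_(i | Pp i) c = #|[pred i | Pp i]|%:R * c.
Proof. by rewrite sumr_const mulr_natl. Qed.

Lemma count_ffun (T : finType) (N : nat) (Z : {set T}) (P : pred T) (f : nat -> R) :
  \sum_(zs : {ffun 'I_N -> T} | [forall k, zs k \in Z]) f #|[set k | P (zs k)]| =
  \sum_(k < N.+1) ('C(N, k) * #|[set z in Z | P z]| ^ k
                    * #|[set z in Z | ~~ P z]| ^ (N - k))%N%:R * f k.
Proof.
set a := #|[set z in Z | P z]|; set b := #|[set z in Z | ~~ P z]|.
rewrite (partition_big (fun zs : {ffun 'I_N -> T} => [set k | P (zs k)]) predT) //=.
have inner : forall S : {set 'I_N},
  \sum_(zs : {ffun 'I_N -> T} | [forall k, zs k \in Z] && ([set k | P (zs k)] == S))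
     f #|[set k | P (zs k)]| = (a ^ #|S| * b ^ (N - #|S|))%N%:R * f #|S|.
  move=> S.
  rewrite (eq_bigr (fun _ => f #|S|)); last by move=> zs /andP[_ /eqP ->].
  rewrite sum_const_pred; congr (_%:R * _).
  pose F := fun k : 'I_N => [pred z : T | (z \in Z) && (P z == (k \in S))].
  transitivity #|(family F : simpl_pred {ffun 'I_N -> T})|.
    apply: eq_card => zs; rewrite !inE.
    apply/andP/familyP.
      move=> [/forallP HZ /eqP HS] k; rewrite /F inE HZ /= -HS inE; exact: eqxx.
    move=> HF; split.
      by apply/forallP => k; have := HF k; rewrite /F inE => /andP[].
    apply/eqP/setP => k; rewrite inE.
    by have := HF k; rewrite /F inE => /andP[_ /eqP].
  rewrite card_family foldr_prodn big_enum /=.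
  rewrite (bigID (mem S)) /=.
  rewrite (eq_bigr (fun _ => a)); last first.
    move=> k kS; apply: eq_card => z; rewrite /F !inE -topredE /= kS; by case: (z \in Z); case: (P z).
  rewrite [X in (_ * X)%N](eq_bigr (fun _ => b)); last first.
    move=> k kS; apply: eq_card => z; rewrite /F !inE -topredE /= (negbTE kS); by case: (z \in Z); case: (P z).
  rewrite !prod_nat_const; congr (_ * _)%N; congr (_ ^ _)%N.
  have HC := cardsC S; rewrite card_ord in HC.
  transitivity #|~: S|; first by apply: eq_card => k; rewrite !inE.
  apply/eqP; rewrite -(eqn_add2l #|S|) HC subnKC //.
  by apply: leq_trans (max_card _) _; rewrite card_ord.
under eq_bigr do rewrite inner.
have ltS : forall S : {set 'I_N}, (#|S| < N.+1)%N.
  by move=> S; rewrite ltnS; apply: leq_trans (max_card _) _; rewrite card_ord.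
rewrite (partition_big (fun S : {set 'I_N} => Ordinal (ltS S)) predT) //=.
apply: eq_bigr => k _.
rewrite (eq_bigr (fun _ => (a ^ k * b ^ (N - k))%N%:R * f k)); last first.
  by move=> S /eqP <-.
rewrite sum_const_pred mulrA -natrM; congr (_%:R * _).
rewrite -mulnA; congr (_ * _)%N.
transitivity 'C(#|'I_N|, k); last by rewrite card_ord.
rewrite -card_draws; apply: eq_card => S.
by rewrite !inE -val_eqE.
Qed.

End Count.


Section Fin.
Variable R : realFieldType.

Definition NumG (d s G : R) := (d - 1) * (s - G ^+ 2) - (s - G) ^+ 2.
Definition MSE (d s G : R) := (d - 1) * NumG d s G / (d * G - s) ^+ 2.

Lemma final_ineq (d s Gs G dl lam : R) :
  1 < d -> 0 < lam -> 0 < d * Gs - s -> 0 <= dl -> Gs - dl <= G ->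
  d * dl <= lam / (1 + lam) * (d * Gs - s) ->
  (d * Gs - s) * dl <= lam * NumG d s Gs -> 0 <= NumG d s Gs ->
  MSE d s G <= (1 + 4 * lam + 5 * lam ^+ 2 + 2 * lam ^+ 3) * MSE d s Gs.
Proof.
move=> hd hl hus hdl hG hA hB hN.
set us := d * Gs - s in hus hA hB *.
set u := d * G - s.
have hl1 : 0 < 1 + lam by lra.
have hA' : (1 + lam) * (d * dl) <= lam * us.
  by move: hA; rewrite mulrAC ler_pdivlMr // mulrC.
have hu : us <= (1 + lam) * u.
  have : u = us - d * (Gs - G) by rewrite /u /us; ring.
  move=> ->.
  have h2 : d * (Gs - G) <= d * dl by rewrite ler_pM2l; lra.
  nra.
have hu0 : 0 < u by nra.
have hNG : NumG d s G <= (1 + 2 * lam) * NumG d s Gs.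
  have E : NumG d s G = NumG d s Gs + 2 * us * (Gs - G) - d * (Gs - G) ^+ 2.
    by rewrite /NumG /us; ring.
  rewrite E.
  have h3 : us * (Gs - G) <= us * dl by rewrite ler_pM2l //; lra.
  have h4 : 0 <= d * (Gs - G) ^+ 2 by apply: mulr_ge0; [lra | exact: sqr_ge0].
  lra.
have hAB : (u ^+ 2)^-1 <= (1 + lam) ^+ 2 * (us ^+ 2)^-1.
  rewrite -[_ * _^-1]/((1 + lam) ^+ 2 / us ^+ 2) ler_pdivlMr ?exprn_gt0 //.
  rewrite mulrC ler_pdivrMr ?exprn_gt0 //.
  rewrite -exprMn; rewrite ler_sqr ?nnegrE; nra.
have hA0 : 0 <= (u ^+ 2)^-1 by rewrite invr_ge0 sqr_ge0.
rewrite /MSE -/u -/us.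
have hd1 : 0 < d - 1 by lra.
case: (lerP (NumG d s G) 0) => hs.
  have : (d - 1) * NumG d s G / u ^+ 2 <= 0.
    rewrite -mulrA; apply: mulr_ge0_le0; [lra|]; apply: mulr_le0_ge0 => //.
  move=> h; apply: (le_trans h); apply: mulr_ge0; first nra.
  by apply: divr_ge0; [nra | exact: sqr_ge0].
have -> : (1 + 4 * lam + 5 * lam ^+ 2 + 2 * lam ^+ 3) * ((d - 1) * NumG d s Gs / us ^+ 2)
   = ((d - 1) * ((1 + 2 * lam) * NumG d s Gs)) * ((1 + lam) ^+ 2 * (us ^+ 2)^-1) by ring.
apply: ler_pM => //.
- nra.
- by rewrite ler_pM2l.
Qed.


Lemma analytic_main (d s e p lam G : R) :
  2 <= d -> 1 <= s -> s <= d - 1 -> s = d * p -> 1 < e -> 0 < lam ->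
  1 / (20 * (e + 1)) <= p * (1 - p) ->
  e * p / (e * p + 1 - p) - (e - 1) / (2 * (e * p + 1 - p)) * (lam / (1 + lam) / (10 * (e + 1))) <= G ->
  0 < d * G - s /\
  MSE d s G <= (1 + 4 * lam + 5 * lam ^+ 2 + 2 * lam ^+ 3) * MSE d s (e * p / (e * p + 1 - p)).
Proof.
move=> hd hs1 hsd hp he hl hpq hG.
have hp0 : 0 < p by nra.
have hp1 : p < 1 by nra.
set D := e * p + 1 - p.
have hD : 0 < D by rewrite /D; nra.
have hDE : D = e * p + 1 - p by [].
clearbody D.
have hDn : D != 0 by exact: lt0r_neq0.
have he1 : e + 1 != 0 by apply: lt0r_neq0; lra.
have hl1 : 1 + lam != 0 by apply: lt0r_neq0; lra.
set tau := 1 / (10 * (e + 1)).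
have htau : 0 < tau by rewrite /tau divr_gt0 //; lra.
set T := lam / (1 + lam) / (10 * (e + 1)).
have hT : T = lam / (1 + lam) * tau by rewrite /T /tau mul1r.
set Gs := e * p / D.
set dl := (e - 1) / (2 * D) * T.
have hl' : 0 < lam / (1 + lam) by rewrite divr_gt0 //; lra.
have hus : d * Gs - s = d * (e - 1) / D * (p * (1 - p)).
  by rewrite /Gs hp hDE; field; rewrite -hDE ?hDn.
have hdl0 : 0 <= dl.
  rewrite /dl hT; apply: mulr_ge0; last by apply: mulr_ge0; lra.
  by apply: divr_ge0; [lra | nra].
have hK : 0 < d * (e - 1) / D by apply: divr_gt0 => //; nra.
have h5 : d * dl <= lam / (1 + lam) * (d * Gs - s).
  have E1 : d * dl = (d * (e - 1) / D * (lam / (1 + lam))) * (tau / 2).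
    by rewrite /dl hT; field; rewrite ?hl1 ?hDn ?he1 //.
  have E2 : lam / (1 + lam) * (d * Gs - s) = (d * (e - 1) / D * (lam / (1 + lam))) * (p * (1 - p)).
    by rewrite hus; field; rewrite ?hl1 ?hDn ?he1 //.
  rewrite E1 E2 ler_pM2l; last exact: mulr_gt0.
  have : tau / 2 = 1 / (20 * (e + 1)) by rewrite /tau; field; rewrite ?hl1 ?hDn ?he1 //.
  by move=> ->.
have hus0 : 0 < d * Gs - s by rewrite hus; apply: mulr_gt0 => //; nra.
have hG' : Gs - dl <= G by rewrite /Gs /dl /T hDE.
split.
  have h6 : lam / (1 + lam) < 1 by rewrite ltr_pdivrMr; lra.
  have h7 : d * (Gs - dl) <= d * G by rewrite ler_pM2l; lra.
  nra.
apply: (@final_ineq d s Gs G dl lam) => //.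
- lra.
- have E1 : (d * Gs - s) * dl = (p * (1 - p) / D ^+ 2) * (d * (e - 1) ^+ 2 * lam * tau / (2 * (1 + lam))).
    by rewrite hus /dl hT; field; rewrite ?hl1 ?hDn ?he1 //.
  have hNum : lam * NumG d s Gs >= (p * (1 - p) / D ^+ 2) * (lam * (d - 1) * e).
    have E3 : NumG d s Gs = (d - 1) * (Gs * (1 - Gs)) + (s - Gs) * (d - 1 - s + Gs).
      by rewrite /NumG; ring.
    have E4 : Gs * (1 - Gs) = e * (p * (1 - p)) / D ^+ 2.
      by rewrite /Gs hDE; field; rewrite -hDE ?hDn.
    have hGs0 : 0 <= Gs by rewrite /Gs divr_ge0 //; nra.
    have hGs1 : Gs <= 1 by rewrite /Gs ler_pdivrMr // mul1r hDE; lra.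
    have h5b : 0 <= (s - Gs) * (d - 1 - s + Gs) by apply: mulr_ge0; lra.
    rewrite E3 E4.
    have -> : p * (1 - p) / D ^+ 2 * (lam * (d - 1) * e) = lam * ((d - 1) * (e * (p * (1 - p)) / D ^+ 2)) by field; rewrite ?hl1 ?hDn ?he1 //.
    rewrite ler_pM2l //; lra.
  apply: le_trans hNum; rewrite E1 ler_pM2l; last first.
    by apply: divr_gt0; [nra | exact: exprn_gt0].
  rewrite /tau ler_pdivrMr; last by apply: mulr_gt0; lra.
  have -> : d * (e - 1) ^+ 2 * lam * (1 / (10 * (e + 1))) = d * (e - 1) ^+ 2 * lam / (10 * (e + 1)) by field; rewrite ?hl1 ?hDn ?he1 //.
  rewrite ler_pdivrMr; last by lra.
  have h6 : d * (e - 1) ^+ 2 <= 2 * (d - 1) * (e * (e + 1)) by nra.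
  have h7 : 0 <= (d - 1) * (e * (e + 1)) by apply: mulr_ge0; nra.
  nra.
- have E3 : NumG d s Gs = (d - 1) * (Gs * (1 - Gs)) + (s - Gs) * (d - 1 - s + Gs).
    by rewrite /NumG; ring.
  have hGs0 : 0 <= Gs by rewrite /Gs divr_ge0 //; nra.
  have hGs1 : Gs <= 1 by rewrite /Gs ler_pdivrMr // mul1r hDE; lra.
  rewrite E3; apply: addr_ge0; apply: mulr_ge0; nra.
Qed.

End Fin.


Lemma sum_ind (R : realType) (T : finType) (A : {set T}) :
  \sum_(i : T) (i \in A)%:R = #|A|%:R :> R.
Proof.
transitivity (\sum_(i in A) (1:R)); last by rewrite sumr_const.
rewrite [RHS]big_mkcond /=; apply: eq_bigr => i _.
by case: (i \in A).
Qed.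

Lemma sum_if (R : realType) (N : nat) (S : {set 'I_N}) (A B : R) :
  \sum_(k < N) (if k \in S then A else B) = #|S|%:R * A + (N%:R - #|S|%:R) * B.
Proof.
transitivity (\sum_(k < N) (B + (k \in S)%:R * (A - B))).
  by apply: eq_bigr => k _; case: (k \in S); rewrite /= ?mul1r ?mul0r; ring.
rewrite big_split /= sumr_const card_ord -big_distrl /= sum_ind -mulr_natl; ring.
Qed.

Lemma sum_if_ind (R : realType) (N : nat) (S : {set 'I_N}) (A B : R) :
  \sum_(k < N) (if k \in S then A else B) * (k \in S)%:R = #|S|%:R * A.
Proof.
transitivity (\sum_(k < N) (k \in S)%:R * A).
  by apply: eq_bigr => k _; case: (k \in S); rewrite /= ?mul1r ?mul0r ?mulr1 ?mulr0.
by rewrite -big_distrl /= sum_ind.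
Qed.

Lemma binom_conv (R : realType) (N k a b : nat) : (k <= N)%N -> (0 < a + b)%N ->
  1 / (a + b)%:R ^+ N * ('C(N, k) * a ^ k * b ^ (N - k))%N%:R =
  bw N k (a%:R / (a + b)%:R : R).
Proof.
move=> hk hab.
have hn : (a + b)%:R != 0 :> R by rewrite pnatr_eq0 -lt0n.
have h1 : 1 - a%:R / (a + b)%:R = b%:R / (a + b)%:R :> R.
  by rewrite natrD; field; rewrite -natrD.
rewrite /bw h1 !expr_div_n -{1}(subnKC hk) exprD !natrM !natrX.
field; rewrite ?expf_neq0 //.
Qed.


Section Main.
Variable R : realType.
Variables (d s N : nat) (eps : R).
Hypotheses (hd : (2 <= d)%N) (hs1 : (1 <= s)%N) (hsd : (s < d)%N) (heps : 0 < eps) (hN : (0 < N)%N).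
Local Notation e := (expR eps).

Lemma e_gt1 : 1 < e.
Proof. have H := expR_ge1Dx eps; have h := heps; lra. Qed.

Lemma den_pos : 0 < ss_den d eps s.
Proof.
rewrite /ss_den.
have h1 : (0 < 'C(d.-1, s.-1))%N by rewrite bin_gt0; have h1 := hsd; have h2 := hs1; lia.
have h2 : 0 < 'C(d.-1, s.-1)%:R :> R by rewrite ltr0n.
have h3 : 0 <= 'C(d.-1, s)%:R :> R by rewrite ler0n.
have H := expR_gt0 eps; nra.
Qed.

Lemma c1E : c1 d eps s = e * c2 d eps s.
Proof. by rewrite /c1 /c2 mulrA mulr1. Qed.

Lemma c2_pos : 0 < c2 d eps s.
Proof. by rewrite /c2 mul1r invr_gt0 den_pos. Qed.

Lemma N_pos : 0 < N%:R :> R. Proof. by rewrite ltr0n. Qed.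
Lemma d_pos : 0 < d%:R :> R. Proof. by rewrite ltr0n; case: d hd. Qed.

Lemma thbar_pos : 0 < thbar R d s.
Proof. by rewrite /thbar divr_gt0 ?ltr0n //; case: d hd. Qed.

Lemma thbar_lt1 : thbar R d s < 1.
Proof. by rewrite /thbar ltr_pdivrMr ?ltr0n ?mul1r ?ltr_nat //; case: d hd. Qed.

Lemma D_pos : 0 < e * thbar R d s + 1 - thbar R d s.
Proof. have H1 := thbar_lt1; have H2 := thbar_pos; have H3 := e_gt1; nra. Qed.


Lemma pi_sums (zs : {ffun 'I_N -> {set 'I_d}}) (j : 'I_d) :
  \sum_(k < N) pi_mmrc eps s zs j k = 1 /\
  \sum_(k < N) pi_mmrc eps s zs j k * (j \in zs k)%:R = G_fun d eps s (theta R zs j).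
Proof.
set S := [set k | j \in zs k].
set th := theta R zs j.
set c1' := c1 d eps s. set c2' := c2 d eps s. set tb := thbar R d s.
have hc1 : c1' = e * c2' by rewrite /c1' c1E.
have hc2 := c2_pos. rewrite -/c2' in hc2.
have hNp := N_pos. have htb0 := thbar_pos. have htb1 := thbar_lt1.
rewrite -/tb in htb0 htb1.
have hD := D_pos. rewrite -/tb in hD.
have he := e_gt1.
have hx : #|S|%:R = N%:R * th.
  rewrite /th /theta -/S mulrC divfK //; exact: lt0r_neq0.
have hx0 : 0 <= th by rewrite /th /theta divr_ge0 ?ler0n.
have hx1 : th <= 1.
  rewrite /th /theta ler_pdivrMr // mul1r ler_nat.
  by apply: leq_trans (max_card _) _; rewrite card_ord.
pose A := if th == tb then c1' / (th * c1' + (1 - th) * c2') / N%:R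
          else if th < tb then t_u d eps s N else (1 - N%:R * (1 - th) * t_l d eps s N) / (N%:R * th).
pose B := if th == tb then c2' / (th * c1' + (1 - th) * c2') / N%:R
          else if th < tb then (1 - N%:R * th * t_u d eps s N) / (N%:R * (1 - th)) else t_l d eps s N.
have Hpi : forall k, pi_mmrc eps s zs j k = if k \in S then A else B.
  move=> k; rewrite /pi_mmrc /pi_mrc /A /B inE -/th -/tb -/c1' -/c2'.
  by case: (j \in zs k); case: (th == tb); case: (th < tb).
have -> : \sum_(k < N) pi_mmrc eps s zs j k * (j \in zs k)%:R =
          \sum_(k < N) (if k \in S then A else B) * (k \in S)%:R.
  by apply: eq_bigr => k _; rewrite Hpi inE.
under eq_bigr do rewrite Hpi.
rewrite sum_if sum_if_ind hx /A /B /G_fun /t_u /t_l -/tb -/c1' -/c2'.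
have hNn : N%:R != 0 :> R by exact: lt0r_neq0.
have hc2n : c2' != 0 by exact: lt0r_neq0.
have hDn : e * tb + 1 - tb != 0 by exact: lt0r_neq0.
case: ifP => [/eqP Heq | Hne].
  rewrite Heq lexx hc1.
  have hden : tb * (e * c2') + (1 - tb) * c2' != 0.
    apply: lt0r_neq0; have -> : tb * (e * c2') + (1 - tb) * c2' = c2' * (e * tb + 1 - tb) by ring.
    exact: mulr_gt0.
  split; field; rewrite ?hNn ?hden ?hDn //.
case: ifP => Hlt.
  rewrite (ltW Hlt) hc1.
  have hden : tb * (e * c2') + (1 - tb) * c2' != 0.
    apply: lt0r_neq0; have -> : tb * (e * c2') + (1 - tb) * c2' = c2' * (e * tb + 1 - tb) by ring.
    exact: mulr_gt0.
  have h1t : 1 - th != 0 by apply: lt0r_neq0; lra.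
  split; field; rewrite ?hNn ?hden ?hDn ?h1t //.
have Hgt : tb < th.
  rewrite lt_neqAle eq_sym Hne /=; rewrite leNgt Hlt //.
rewrite leNgt Hgt /= hc1.
have hden : tb * (e * c2') + (1 - tb) * c2' != 0.
  apply: lt0r_neq0; have -> : tb * (e * c2') + (1 - tb) * c2' = c2' * (e * tb + 1 - tb) by ring.
  exact: mulr_gt0.
have hth : th != 0 by apply: lt0r_neq0; lra.
split; field; rewrite ?hNn ?hden ?hDn ?hth //.
Qed.

Definition Q0 (m b : R) : R := (s%:R * (1 - 2 * b) + d%:R * b ^+ 2) * m^-1 ^+ 2 + 2 * b * m^-1 + 1.

Lemma sqerr_formula (m b : R) (z : {set 'I_d}) (j : 'I_d) :
  #|z| = s -> sqerr m b z j = Q0 m b - 2 * m^-1 * (j \in z)%:R.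
Proof.
move=> Hz; rewrite /sqerr /est.
transitivity (\sum_(i < d) ((i \in z)%:R * ((1 - 2 * b) * m^-1 ^+ 2) + b ^+ 2 * m^-1 ^+ 2
   + (i == j)%:R * (1 - 2 * ((j \in z)%:R - b) * m^-1))).
  apply: eq_bigr => i _; case Hij: (i == j).
    by move/eqP: Hij => ->; case: (j \in z); rewrite /= ?mulr1n ?mulr0n; ring.
  by case: (i \in z); rewrite /= ?mulr1n ?mulr0n; ring.
rewrite !big_split /= -big_distrl /= sum_ind Hz sumr_const card_ord.
rewrite (bigD1 j) //= eqxx big1; last by move=> i /negbTE ->; rewrite mul0r.
have -> : (true%:R : R) = 1 by []. rewrite /Q0 -[b ^+ 2 * m^-1 ^+ 2 *+ d]mulr_natl; ring.
Qed.

Lemma inner_sum (zs : {ffun 'I_N -> {set 'I_d}}) (j : 'I_d) (m b : R) :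
  (forall k, zs k \in Zset d s) ->
  \sum_(k < N) pi_mmrc eps s zs j k * sqerr m b (zs k) j =
  Q0 m b - 2 * m^-1 * G_fun d eps s (theta R zs j).
Proof.
move=> Hz; have [H1 H2] := pi_sums zs j.
transitivity (\sum_(k < N) (Q0 m b * pi_mmrc eps s zs j k
   - 2 * m^-1 * (pi_mmrc eps s zs j k * (j \in zs k)%:R))).
  apply: eq_bigr => k _; rewrite sqerr_formula; first ring.
  by move: (Hz k); rewrite inE => /eqP.
by rewrite big_split /= sumrN -!big_distrr /= H1 H2 mulr1.
Qed.

Lemma card_Zset : #|Zset d s| = 'C(d, s).
Proof. by rewrite /Zset card_draws card_ord. Qed.

Lemma card_notin (j : 'I_d) : #|[set z in Zset d s | j \notin z]| = 'C(d.-1, s).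
Proof.
transitivity #|[set A : {set 'I_d} | A \subset [set~ j] & #|A| == s]|.
  apply: eq_card => z; rewrite !inE andbC; congr (_ && _).
  apply/idP/idP => [jz | /fintype.subsetP H].
    by apply/fintype.subsetP => i iz; rewrite in_setC1; apply: contraNneq jz => <-.
  by apply/negP => /H; rewrite in_setC1 eqxx.
by rewrite cards_draws cardsC1 card_ord.
Qed.

Lemma card_in (j : 'I_d) : #|[set z in Zset d s | j \in z]| = 'C(d.-1, s.-1).
Proof.
have H : #|[set z in Zset d s | j \in z]| + #|[set z in Zset d s | j \notin z]| = 'C(d, s).
  rewrite -card_Zset -(cardsID [set z : {set 'I_d} | j \in z] (Zset d s)); congr (_ + _)%N.
    by apply: eq_card => z; rewrite !inE.
  by apply: eq_card => z; rewrite !inE andbC.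
move: H; rewrite card_notin.
have E : 'C(d, s) = ('C(d.-1, s) + 'C(d.-1, s.-1))%N.
  by move: hd hs1; case: (d) => // d'; case: (s) => // s' _ _ /=; rewrite binS.
rewrite E; lia.
Qed.



Lemma Cds : 'C(d, s) = ('C(d.-1, s.-1) + 'C(d.-1, s))%N.
Proof. by move: hd hs1; case: (d) => // d'; case: (s) => // s' _ _ /=; rewrite binS addnC. Qed.

Lemma tb_eq : ('C(d.-1, s.-1)%:R / ('C(d.-1, s.-1) + 'C(d.-1, s))%:R : R) = thbar R d s.
Proof.
rewrite -Cds /thbar.
have H : (d * 'C(d.-1, s.-1) = s * 'C(d, s))%N.
  by move: hd hs1; case: (d) => // d'; case: (s) => // s' _ _ /=; rewrite mul_bin_diag.
have hC : ('C(d, s)%:R : R) != 0.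
  by rewrite pnatr_eq0 -lt0n bin_gt0 ltnW.
have hdn : (d%:R : R) != 0 by apply: lt0r_neq0; exact: d_pos.
apply/eqP; rewrite eqr_div // -!natrM mulnC H mulnC //.
Qed.

Lemma E_mmrc_eq (j : 'I_d) :
  E_mmrc eps s N j = Q0 (m_mmrc d eps s N) (b_mmrc d eps s N)
     - 2 * (m_mmrc d eps s N)^-1 * G_mmrc d eps s N.
Proof.
rewrite /E_mmrc.
set m := m_mmrc d eps s N; set b := b_mmrc d eps s N.
pose f := fun c : nat => Q0 m b - 2 * m^-1 * G_fun d eps s (c%:R / N%:R).
transitivity (\sum_(zs : {ffun 'I_N -> {set 'I_d}} | [forall k, zs k \in Zset d s])
   (1 / #|Zset d s|%:R ^+ N) * f #|[set k | j \in zs k]|).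
  by apply: eq_bigr => zs /forallP Hz; rewrite inner_sum.
rewrite -big_distrr /=.
rewrite (count_ffun N (Zset d s) (fun z : {set 'I_d} => j \in z) f).
rewrite card_in card_notin card_Zset Cds big_distrr /=.
transitivity (\sum_(k < N.+1) bw N k (thbar R d s) * f k).
  apply: eq_bigr => k _; rewrite mulrA binom_conv ?tb_eq //.
    by rewrite -ltnS ltn_ord.
  by rewrite addn_gt0 bin_gt0; apply/orP; left; have h1 := hsd; have h2 := hs1; lia.
rewrite /f.
transitivity (\sum_(k < N.+1) (Q0 m b * bw N k (thbar R d s)
   - 2 * m^-1 * (bw N k (thbar R d s) * G_fun d eps s (k%:R / N%:R)))).
  by apply: eq_bigr => k _; ring.
by rewrite big_split /= sumrN -!big_distrr /= bw_sum mulr1.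
Qed.

Lemma E_ss_eq (j : 'I_d) :
  E_ss eps s j = Q0 (m_ss d eps s) (b_ss d eps s)
     - 2 * (m_ss d eps s)^-1 * ('C(d.-1, s.-1)%:R * c1 d eps s).
Proof.
rewrite /E_ss.
set m := m_ss d eps s; set b := b_ss d eps s.
transitivity (\sum_(z in Zset d s) (Q0 m b * q_ss eps s j z
   - 2 * m^-1 * (q_ss eps s j z * (j \in z)%:R))).
  apply: eq_bigr => z Hz; rewrite sqerr_formula; first ring.
  by move: Hz; rewrite inE => /eqP.
rewrite big_split /= sumrN -!big_distrr /=.
have hA : forall c : R, \sum_(z in Zset d s | j \in z) c = 'C(d.-1, s.-1)%:R * c.
  move=> c; rewrite sum_const_pred -(card_in j); congr (_%:R * _).
  by apply: eq_card => z; rewrite !inE.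
have hB : forall c : R, \sum_(z in Zset d s | j \notin z) c = 'C(d.-1, s)%:R * c.
  move=> c; rewrite sum_const_pred -(card_notin j); congr (_%:R * _).
  by apply: eq_card => z; rewrite !inE.
rewrite [\sum_(i in Zset d s) (_ * _)](bigID (fun z : {set 'I_d} => j \in z)) /=.
rewrite [\sum_(i in Zset d s) q_ss eps s j i](bigID (fun z : {set 'I_d} => j \in z)) /=.
rewrite (eq_bigr (fun _ => c1 d eps s)); last by move=> z /andP[_ jz]; rewrite /q_ss jz.
rewrite [X in _ * (_ + X) - _](eq_bigr (fun _ => c2 d eps s)); last first.
  by move=> z /andP[_ /negbTE jz]; rewrite /q_ss jz.
rewrite [X in _ - _ * (X + _)](eq_bigr (fun _ => c1 d eps s)); last first.
  by move=> z /andP[_ jz]; rewrite /q_ss jz mulr1.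
rewrite [X in _ - _ * (_ + X)](eq_bigr (fun _ => 0)); last first.
  by move=> z /andP[_ /negbTE jz]; rewrite /q_ss jz mulr0.
rewrite !sum_const_pred mulr0 addr0.
have cA : #|[pred i in Zset d s | j \in i]| = 'C(d.-1, s.-1).
  by rewrite -(card_in j); apply: eq_card => z; rewrite !inE.
have cB : #|[pred i in Zset d s | j \notin i]| = 'C(d.-1, s).
  by rewrite -(card_notin j); apply: eq_card => z; rewrite !inE.
rewrite cA cB.
have -> : 'C(d.-1, s.-1)%:R * c1 d eps s + 'C(d.-1, s)%:R * c2 d eps s = 1.
  rewrite /c1 /c2 /ss_den; field.
  by apply: lt0r_neq0; have := den_pos; rewrite /ss_den.
by rewrite mulr1.
Qed.

End Main.


Lemma Gfun_lb (R : realType) (d s : nat) (eps th T : R) :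
  1 < expR eps -> 0 < expR eps * thbar R d s + 1 - thbar R d s -> 0 < T ->
  expR eps * thbar R d s / (expR eps * thbar R d s + 1 - thbar R d s)
  - (thbar R d s - th) / (expR eps * thbar R d s + 1 - thbar R d s)
  - (expR eps - 1) / (expR eps * thbar R d s + 1 - thbar R d s)
     * (((thbar R d s - th) ^+ 2 / T + T) / 4 + (thbar R d s - th) / 2)
  <= G_fun d eps s th.
Proof.
move=> he hD hT.
set tb := thbar R d s in hD *; set e := expR eps in he hD *; set D := e * tb + 1 - tb in hD *.
set X := tb - th.
set Y := (X ^+ 2 / T + T) / 4 + X / 2.
have hTn : T != 0 by exact: lt0r_neq0.
have hY1 : X <= Y.
  have -> : Y = X + (X - T) ^+ 2 / (4 * T) by rewrite /Y; field.
  by rewrite lerDl divr_ge0 ?sqr_ge0 //; lra.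
have hY0 : 0 <= Y.
  have -> : Y = (X + T) ^+ 2 / (4 * T) by rewrite /Y; field.
  by rewrite divr_ge0 ?sqr_ge0 //; lra.
have hDn : D != 0 by exact: lt0r_neq0.
have -> : e * tb / D - X / D - (e - 1) / D * Y = (e * tb - X - (e - 1) * Y) * D^-1.
  by field.
have hDi : 0 < D^-1 by rewrite invr_gt0.
rewrite /G_fun -/tb -/e -/D; case: ifP => _.
  rewrite ler_pM2r //; rewrite /X in hY1 hY0 *; nra.
rewrite ler_pM2r //; rewrite /X in hY1 hY0 *; nra.
Qed.

Lemma bw_ge0 (R : realType) N k (p : R) : 0 <= p -> p <= 1 -> 0 <= bw N k p.
Proof.
move=> h0 h1; rewrite /bw; apply: mulr_ge0; first apply: mulr_ge0.
- exact: ler0n.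
- exact: exprn_ge0.
- by apply: exprn_ge0; lra.
Qed.

Lemma Gmmrc_lb (R : realType) (d s N : nat) (eps T : R) :
  (0 < N)%N -> 1 < expR eps -> 0 < thbar R d s -> thbar R d s < 1 -> 0 < T ->
  expR eps * thbar R d s / (expR eps * thbar R d s + 1 - thbar R d s)
  - (expR eps - 1) / (expR eps * thbar R d s + 1 - thbar R d s)
     * ((thbar R d s * (1 - thbar R d s) / N%:R / T + T) / 4)
  <= G_mmrc d eps s N.
Proof.
move=> hN he h0 h1 hT.
set tb := thbar R d s in h0 h1 *; set e := expR eps in he *; set D := e * tb + 1 - tb.
have hD : 0 < D by rewrite /D; nra.
have hDn : D != 0 by exact: lt0r_neq0.
have hTn : T != 0 by exact: lt0r_neq0.
have hNn : N%:R != 0 :> R by rewrite pnatr_eq0 -lt0n.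
set a := e * tb / D - (e - 1) / D * (T / 4).
set b := - D^-1 - (e - 1) / D / 2.
set c := - ((e - 1) / D / (4 * T)).
have -> : e * tb / D - (e - 1) / D * ((tb * (1 - tb) / N%:R / T + T) / 4)
   = a + c * (tb * (1 - tb) / N%:R) by rewrite /a /c; field; rewrite ?hDn ?hTn ?hNn.
rewrite -(bw_X tb a b c hN) /G_mmrc.
apply: ler_sum => k _.
rewrite -/tb -[X in X * G_fun _ _ _ _]/(bw N k tb).
apply: ler_wpM2l; first by apply: bw_ge0; lra.
have H := Gfun_lb (k%:R / N%:R) he hD hT; apply: le_trans H.
by rewrite /a /b /c -/e -/tb -/D le_eqVlt; apply/orP; left; apply/eqP; field; rewrite ?hDn ?hTn ?hNn.
Qed.


Lemma ss_facts (R : realType) (d : nat) (eps : R) :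
  (2 <= d)%N -> 1 <= eps ->
  let s := ss_s d eps in
  [/\ (1 <= s)%N, (s < d)%N, d%:R / (1 + expR eps) <= s%:R & s%:R < d%:R / (1 + expR eps) + 1].
Proof.
move=> hd heps s.
set x := d%:R / (1 + expR eps).
have he := expR_ge1Dx eps.
have hd2 : 2 <= d%:R :> R by rewrite ler_nat.
have hx0 : 0 < x by rewrite /x divr_gt0 //; lra.
have hsE : s%:R = (Num.ceil x)%:~R :> R.
  rewrite /s /ss_s -/x natr_absz ger0_norm //.
  by rewrite ceil_ge0; lra.
have h1 : x <= s%:R by rewrite hsE ceil_ge.
have h2 : s%:R < x + 1.
  have := ceilB1_lt x; rewrite intrB -hsE /= => h; lra.
have hx3 : x <= d%:R / 3.
  rewrite /x ler_pdivrMr; last lra.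
  rewrite mulrAC ler_pdivlMr; last lra.
  nra.
split => //.
- by rewrite -(ltr0n R); lra.
- rewrite -(ltr_nat R); lra.
Qed.

Lemma ln_lb (R : realType) (x : R) : 0 < x -> 1 - x^-1 <= ln x.
Proof.
move=> hx.
have := expR_ge1Dx (- ln x).
rewrite expRN lnK ?posrE // => h; lra.
Qed.

Lemma V_bound (R : realType) (N : nat) (e lam p : R) :
  1 < e -> 0 < lam -> 0 <= p -> p <= 1 ->
  2 * (e + 1) ^+ 2 * (1 + lam) ^+ 2 / ((6 / 25) ^+ 2 * lam ^+ 2)
    * ln (8 * (1 + lam) / ((6 / 25) * lam)) <= N%:R ->
  (0 < N)%N /\
  p * (1 - p) / N%:R <= (lam / (1 + lam) / (10 * (e + 1))) ^+ 2.
Proof.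
move=> he hl hp0 hp1 hN.
set x := 8 * (1 + lam) / ((6 / 25) * lam).
have hx : 100 / 3 <= x.
  rewrite /x ler_pdivlMr; last by apply: mulr_gt0; lra.
  lra.
have hL : 97 / 100 <= ln x.
  have h := ln_lb (lt_le_trans (_ : 0 < 100 / 3) hx).
  have : x^-1 <= 3 / 100.
    rewrite -[3 / 100]invf_div lef_pV2 ?posrE //; lra.
  lra.
set K := (e + 1) ^+ 2 * (1 + lam) ^+ 2 / lam ^+ 2.
have hl0 : lam != 0 by exact: lt0r_neq0.
have hK : 0 < K.
  rewrite /K; apply: divr_gt0; last by apply: exprn_gt0.
  by apply: mulr_gt0; apply: exprn_gt0; lra.
have E : 2 * (e + 1) ^+ 2 * (1 + lam) ^+ 2 / ((6 / 25) ^+ 2 * lam ^+ 2) = 1250 / 36 * K.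
  by rewrite /K; field.
rewrite E in hN.
have hN33 : 33 * K <= N%:R by nra.
have hNp : 0 < N%:R :> R by nra.
split; first by rewrite -(ltr0n R).
set T := lam / (1 + lam) / (10 * (e + 1)).
have hTK : T ^+ 2 * K = 1 / 100.
  rewrite /T /K; field; rewrite ?hl0 /=.
  apply/andP; split; apply: lt0r_neq0; lra.
rewrite ler_pdivrMr //.
have hT2 : 0 <= T ^+ 2 by exact: sqr_ge0.
have : T ^+ 2 * (33 * K) <= T ^+ 2 * N%:R by rewrite ler_wpM2l.
nra.
Qed.


Lemma Q0_MSE (R : realType) (d s : nat) (G : R) :
  (2 <= d)%N -> d%:R * G - s%:R != 0 ->
  Q0 d s (d%:R / (d%:R - 1) * G - s%:R / (d%:R - 1)) ((s%:R - G) / (d%:R - 1))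
   - 2 * (d%:R / (d%:R - 1) * G - s%:R / (d%:R - 1))^-1 * G = MSE d%:R s%:R G.
Proof.
move=> hd hu.
have hd1 : d%:R - 1 != 0 :> R.
  apply: lt0r_neq0; have : 2 <= d%:R :> R by rewrite ler_nat.
  lra.
have -> : d%:R / (d%:R - 1) * G - s%:R / (d%:R - 1) = (d%:R * G - s%:R) / (d%:R - 1).
  by field.
rewrite /Q0 /MSE /NumG; field; rewrite ?hd1 ?hu //.
Qed.

Unset Implicit Arguments.
Theorem theorem7 (R : realType) (d N : nat) (eps lam : R) :
  (2 <= d)%N -> 1 <= eps -> 0 < lam ->
  let s := ss_s d eps in
  2 * (expR eps + 1) ^+ 2 * (1 + lam) ^+ 2 / ((6 / 25) ^+ 2 * lam ^+ 2)
    * ln (8 * (1 + lam) / ((6 / 25) * lam)) <= N%:R ->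
  forall j : 'I_d,
    E_mmrc eps s N j <=
      (1 + 4 * lam + 5 * lam ^+ 2 + 2 * lam ^+ 3) * E_ss eps s j.
Proof.
move=> hd heps hl s hNb j.
have heps0 : 0 < eps by lra.
have [hs1 hsd hsx1 hsx2] := ss_facts hd heps.
rewrite -/s in hs1 hsd hsx1 hsx2.
have he := e_gt1 heps0.
have he2 : 2 <= expR eps by have := expR_ge1Dx eps; lra.
have htb0 := thbar_pos R hd hs1.
have htb1 := thbar_lt1 R hd hsd.
have hD := D_pos hd hs1 hsd heps0.
have [hN hV] := V_bound he hl (ltW htb0) (ltW htb1) hNb.
rewrite (E_mmrc_eq hd hs1 hsd heps0 hN) (E_ss_eq hd hs1 hsd heps0 hN).
have hdR : 2 <= d%:R :> R by rewrite ler_nat.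
have hdn : d%:R != 0 :> R by apply: lt0r_neq0; lra.
have hd1 : d%:R - 1 != 0 :> R by apply: lt0r_neq0; lra.
have hsR : 1 <= s%:R :> R by rewrite ler1n.
have hsdR : s%:R + 1 <= d%:R :> R by rewrite natr1 ler_nat.
have hstb : s%:R = d%:R * thbar R d s by rewrite /thbar; field.
set tb := thbar R d s in htb0 htb1 hD hV hstb *.
set e := expR eps in he he2 hD hV hsx1 hsx2 *.
set D := e * tb + 1 - tb in hD *.
have hDn : D != 0 by exact: lt0r_neq0.
set Gs := e * tb / D.
have hGs : 'C(d.-1, s.-1)%:R * c1 d eps s = Gs.
  have ha := tb_eq R hd hs1 hsd.
  have hapos : 0 < 'C(d.-1, s.-1)%:R :> R.
    by rewrite ltr0n bin_gt0 -!subn1 leq_sub2r // ltnW.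
  have hbpos : 0 <= 'C(d.-1, s)%:R :> R by rewrite ler0n.
  rewrite /Gs /D /tb -ha /c1 /ss_den -/e natrD.
  move: hapos hbpos; move: ('C(d.-1, s.-1)%:R : R) ('C(d.-1, s)%:R : R) => a b ha0 hb0.
  have e0 : 0 < e by lra.
  have h1 : a + b != 0 by apply: lt0r_neq0; lra.
  have hae : 0 < a * e by exact: mulr_gt0.
  have h2 : a * e + b != 0 by apply: lt0r_neq0; lra.
  have -> : e * (a / (a + b)) + 1 - a / (a + b) = (a * e + b) / (a + b) by field.
  by field; rewrite h1 h2.
have hus : d%:R * Gs - s%:R = d%:R * tb * ((e - 1) * (1 - tb)) / D.
  by rewrite /Gs hstb /D; field.
have hus0 : 0 < d%:R * Gs - s%:R.
  rewrite hus; apply: divr_gt0 => //; apply: mulr_gt0; first by apply: mulr_gt0 => //; lra.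
  by apply: mulr_gt0; lra.
have hmss : m_ss d eps s = d%:R / (d%:R - 1) * Gs - s%:R / (d%:R - 1).
  have hq : s%:R * (e - 1) + d%:R != 0 :> R by apply: lt0r_neq0; nra.
  rewrite /m_ss -/e /Gs /D hstb; field; rewrite ?hd1 ?hq ?hdn //=.
  by rewrite -hstb -/D hDn.
have hbss : b_ss d eps s = (s%:R - Gs) / (d%:R - 1).
  have hq : s%:R * (e - 1) + d%:R != 0 :> R by apply: lt0r_neq0; nra.
  rewrite /b_ss -/e /Gs /D hstb; field; rewrite ?hd1 ?hq ?hdn //=.
  by rewrite -hstb -/D hDn.
rewrite hGs hmss hbss Q0_MSE //; last exact: lt0r_neq0.
set T := lam / (1 + lam) / (10 * (e + 1)) in hV.
have hT : 0 < T by rewrite /T; apply: divr_gt0; [apply: divr_gt0; lra | lra].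
have hGlb := Gmmrc_lb (d := d) (s := s) hN he htb0 htb1 hT.
rewrite -/tb -/e -/D in hGlb.
have hpq : 1 / (20 * (e + 1)) <= tb * (1 - tb).
  have h1 : 1 / (1 + e) <= tb.
    rewrite -(ler_pM2l (_ : 0 < d%:R)); last lra.
    by rewrite -hstb mul1r.
  have h3 : d%:R / (1 + e) <= d%:R / 3.
    rewrite ler_pdivrMr; last lra.
    rewrite mulrAC ler_pdivlMr; last lra.
    nra.
  have h2 : 1 / 20 <= 1 - tb.
    rewrite -(ler_pM2l (_ : 0 < d%:R)); last lra.
    have : d%:R * tb < d%:R / 3 + 1 by rewrite -hstb; lra.
    have : d%:R * (1 / 20) = d%:R / 20 :> R by rewrite mulrA mulr1.
    lra.
  have -> : 1 / (20 * (e + 1)) = 1 / (1 + e) * (1 / 20).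
    by field; rewrite ?(lt0r_neq0 (_ : 0 < e + 1)) ?(lt0r_neq0 (_ : 0 < 1 + e)); lra.
  apply: ler_pM => //; rewrite divr_ge0 //; lra.
have hG : Gs - (e - 1) / (2 * D) * T <= G_mmrc d eps s N.
  have hVT : tb * (1 - tb) / N%:R / T <= T.
    by rewrite ler_pdivrMr // -expr2.
  have hcmp : (e - 1) / D * ((tb * (1 - tb) / N%:R / T + T) / 4) <= (e - 1) / (2 * D) * T.
    rewrite (_ : (e - 1) / (2 * D) * T = (e - 1) / D * (T / 2)); last by field.
    have h0 : 0 <= (e - 1) / D by apply: divr_ge0; lra.
    by apply: ler_wpM2l => //; lra.
  rewrite /Gs; lra.
have hsd1 : s%:R <= d%:R - 1 :> R by lra.
have [hpos hfin] := analytic_main hdR hsR hsd1 hstb he hl hpq hG.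
rewrite Q0_MSE //; last exact: lt0r_neq0.
Qed.
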